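(* Let $R$ be a commutative Noetherian ring, $M$ a finitely generated $R$-module, $X \subseteq \mathrm{Spec}(R)$ a basic set, and $\mathscr{E}$ an $R$-submodule of $\mathrm{Hom}_R(M,R)$. For any subset $S \subseteq M$ and any integer $t \in \mathbb{N}$, the set $Y_t := \{\mathfrak{p} \in X \mid \delta^{\mathscr{E}}_\mathfrak{p}(S,M) \leq t\}$ is closed in $X$ (with the subspace Zariski topology).
   Context: A subset $X \subseteq \mathrm{Spec}(R)$ is basic if, whenever the intersection of a family of primes in $X$ is a prime ideal, that intersection belongs to $X$. $\mathscr{E}_\mathfrak{p}$ is viewed inside $\mathrm{Hom}_{R_\mathfrak{p}}(M_\mathfrak{p},R_\mathfrak{p})$. A free $\mathscr{E}_\mathfrak{p}$-summand of $M_\mathfrak{p}$ is a direct summand $F$ (with complement $G$) of $M_\mathfrak{p}$, $F \cong R_\mathfrak{p}^n$, such that each coordinate of the projection $M_\mathfrak{p} \to F \cong R_\mathfrak{p}^n$ along $G$ lies in $\mathscr{E}_\mathfrak{p}$. With $\langle S\rangle$ the submodule generated by $S$, $\delta^{\mathscr{E}}_\mathfrak{p}(S,M)$ is the largest integer $n \ge 0$ such that there exists a free $\mathscr{E}_\mathfrak{p}$-summand of $M_\mathfrak{p}$ of rank $n$ contained in $\langle S\rangle_\mathfrak{p}$. *)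

(* Defs.v *)
From HB Require Import structures.
From mathcomp Require Import all_boot all_algebra.
Set Implicit Arguments. Unset Strict Implicit. Unset Printing Implicit Defensive.
Import GRing.Theory.
Local Open Scope ring_scope.

Section RingDefs.
Variable R : comNzRingType.

Definition is_ideal (I : R -> Prop) : Prop :=
  [/\ I 0, (forall a b, I a -> I b -> I (a + b)) & (forall r a, I a -> I (r * a))].

Definition is_prime_ideal (P : R -> Prop) : Prop :=
  [/\ is_ideal P, ~ P 1 & (forall a b, P (a * b) -> P a \/ P b)].

Definition ideal_fg (I : R -> Prop) : Prop :=
  exists s : seq R, forall r,
    I r <-> exists c : 'I_(size s) -> R, r = \sum_(i < size s) c i * s`_i.

Definition noetherian : Prop := forall I, is_ideal I -> ideal_fg I.

Definition basic_set (X : (R -> Prop) -> Prop) : Prop :=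
  (forall P, X P -> is_prime_ideal P) /\
  (forall F : (R -> Prop) -> Prop, (forall Q, F Q -> X Q) ->
     is_prime_ideal (fun r => forall Q, F Q -> Q r) ->
     X (fun r => forall Q, F Q -> Q r)).

(* Y is closed in X for the subspace Zariski topology:
   Y = X ∩ V(A) for some subset A of R. *)
Definition zariski_closed_in (X Y : (R -> Prop) -> Prop) : Prop :=
  exists A : R -> Prop, forall P, X P -> (Y P <-> (forall a, A a -> P a)).

(* equality of fractions a/s = b/t in R_p *)
Definition locR_eq (p : R -> Prop) (x y : R * R) : Prop :=
  exists w, ~ p w /\ w * (y.2 * x.1 - x.2 * y.1) = 0.

End RingDefs.

Section ModDefs.
Variables (R : comNzRingType) (M : lmodType R).

Definition fin_gen : Prop :=
  exists s : seq M, forall m,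
    exists c : 'I_(size s) -> R, m = \sum_(i < size s) c i *: s`_i.

Definition span (S : M -> Prop) (m : M) : Prop :=
  exists s : seq M, (forall x, x \in s -> S x) /\
    exists c : 'I_(size s) -> R, m = \sum_(i < size s) c i *: s`_i.

Definition is_Rlinear (f : M -> R) : Prop :=
  forall a x y, f (a *: x + y) = a * f x + f y.

Definition hom_submodule (E : (M -> R) -> Prop) : Prop :=
  [/\ (forall f, E f -> is_Rlinear f),
      E (fun _ => 0),
      (forall f g, E f -> E g -> E (fun x => f x + g x)) &
      (forall a f, E f -> E (fun x => a * f x))].

(* An element m/s of M_p is represented by a pair (m, s) with s ∉ p;
   an element e/u of E_p (e ∈ E, u ∉ p) acts on M_p as the
   R_p-linear map m/s |-> e(m)/(u s). *)
Definition Ep_apply (phi : (M -> R) * R) (x : M * R) : R * R :=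
  (phi.1 x.1, phi.2 * x.2).

(* There is a free E_p-summand of M_p of rank n contained in <S>_p.
   Such a summand F (with complement G, F ≅ R_p^n) is the same as a split
   pair  R_p^n --iota--> M_p --pi--> R_p^n,  pi ∘ iota = id, with
   F = im iota, G = ker pi;  iota is given by the images x_j of the standard
   basis (F ⊆ <S>_p iff each x_j ∈ <S>_p), and pi by its coordinates
   phi_i, which are required to lie in E_p.  pi ∘ iota = id reads
   phi_i(x_j) = delta_ij in R_p. *)
Definition free_E_summand (p : R -> Prop) (E : (M -> R) -> Prop)
    (S : M -> Prop) (n : nat) : Prop :=
  exists (x : 'I_n -> M * R) (phi : 'I_n -> (M -> R) * R),
    [/\ (forall j, span S (x j).1 /\ ~ p (x j).2),
        (forall i, E (phi i).1 /\ ~ p (phi i).2) &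
        (forall i j, locR_eq p (Ep_apply (phi i) (x j)) ((i == j)%:R, 1))].

(* delta^E_p(S,M) <= t, where delta is the largest such rank *)
Definition delta_le (p : R -> Prop) (E : (M -> R) -> Prop) (S : M -> Prop)
    (t : nat) : Prop :=
  forall n, free_E_summand p E S n -> (n <= t)%N.

End ModDefs.

(* Main.v *)
Require Import Defs.
From mathcomp Require Import all_boot all_algebra.
From Stdlib Require Import Classical ClassicalEpsilon.
Import GRing.Theory.
Local Open Scope ring_scope.

Section Aux.
Variable R : comNzRingType.

Lemma notin_mul {q : R -> Prop} {a b : R} : is_prime_ideal q -> ~ q (a * b) -> ~ q a /\ ~ q b.
Proof.
case=> [[_ _ Hm] _ _] H; split=> Hq; apply: H.
  by rewrite mulrC; apply: Hm.
by apply: Hm.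
Qed.

Lemma mul_notin {q : R -> Prop} {a b : R} : is_prime_ideal q -> ~ q a -> ~ q b -> ~ q (a * b).
Proof. by case=> [_ _ Hp] Ha Hb /Hp [] . Qed.

Lemma prod_notin {q : R -> Prop} {I : finType} {f : I -> R} :
  is_prime_ideal q -> (forall i, ~ q (f i)) -> ~ q (\prod_i f i).
Proof.
move=> Hq Hf; apply: (big_ind (fun x => ~ q x)) => //.
  by case: Hq.
by move=> a b; apply: mul_notin.
Qed.

Lemma notin_prod {q : R -> Prop} {I : finType} {f : I -> R} :
  is_prime_ideal q -> ~ q (\prod_i f i) -> forall i, ~ q (f i).
Proof.
move=> Hq H i; rewrite (bigD1 i) //= in H.
by case: (notin_mul Hq H).
Qed.
End Aux.
Arguments notin_mul {R q a b}.
Arguments mul_notin {R q a b}.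
Arguments prod_notin {R q I f}.
Arguments notin_prod {R q I f}.

Theorem lemma4p1 (R : comNzRingType) (M : lmodType R)
    (X : (R -> Prop) -> Prop) (E : (M -> R) -> Prop) (S : M -> Prop) (t : nat) :
  noetherian R -> fin_gen M -> basic_set X -> hom_submodule E ->
  zariski_closed_in X (fun p => delta_le p E S t).
Proof.
move=> _ _ [HX _] _.
exists (fun a => forall q, is_prime_ideal q -> ~ q a ->
          exists n, free_E_summand q E S n /\ (t < n)%N).
move=> P XP; have PP := HX P XP; split.
  move=> Hd a Ha; apply: NNPP => nPa.
  have [n [Hn ltn]] := Ha P PP nPa.
  by have := Hd n Hn; rewrite leqNgt ltn.
move=> HA n Hn; rewrite leqNgt; apply/negP => ltn.
case: Hn => [x [phi [Hx Hphi Heq]]].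
pose w (ij : 'I_n * 'I_n) :=
  proj1_sig (constructive_indefinite_description _ (Heq ij.1 ij.2)).
have Hw ij := proj2_sig (constructive_indefinite_description _ (Heq ij.1 ij.2)).
set s := (\prod_j (x j).2 * \prod_i (phi i).2) * \prod_ij w ij.
have : P s.
  apply: HA => q Hq nqs; exists n; split => //.
  have [nq12 nq3] := notin_mul Hq nqs.
  have [nq1 nq2] := notin_mul Hq nq12.
  exists x, phi; split.
  - by move=> j; split; [case: (Hx j) | apply: (notin_prod Hq nq1)].
  - by move=> i; split; [case: (Hphi i) | apply: (notin_prod Hq nq2)].
  - move=> i j; exists (w (i, j)); split.
      by apply: (notin_prod Hq nq3).
    exact: (proj2 (Hw (i, j))).
apply: mul_notin => //; first apply: mul_notin => //.
- by apply: prod_notin => // j; case: (Hx j).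
- by apply: prod_notin => // i; case: (Hphi i).
- by apply: prod_notin => // ij; case: (Hw ij).
Qed.
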